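(* Let $f\in\mathbb{Z}[x,y]$ be square-free without non-constant factors in $\mathbb{Z}[x]$, $C=V(f)$, $R(x)=\operatorname{res}(f,f_y,y)$. Let $\alpha$ be a real root of $R$, $\alpha'$ the next larger real root of $R$ (or $+\infty$), $I=(\alpha,\alpha')$, and let $\varphi_1<\cdots<\varphi_{m_I}$ be the continuous functions on $I$ whose graphs form $C\cap(I\times\mathbb{R})$. Let $y_1<\cdots<y_{m_\alpha}$ be the real roots of $f(\alpha,y)$ and let $t_1<y_1<t_2<\cdots<y_{m_\alpha}<t_{m_\alpha+1}$ be rational numbers. Let $b\in I$ be rational such that $f(x,t_i)\neq 0$ for all $x\in[\alpha,b]$ and all $i=1,\ldots,m_\alpha+1$. Let $\gamma_j:=\varphi_j(b)$ be the $j$-th real root of $f(b,y)$. If $t_{i_0}<\gamma_j<t_{i_0+1}$ for some $i_0\in\{1,\ldots,m_\alpha\}$, then $\lim_{x\to\alpha^+}\varphi_j(x)=y_{i_0}$. If $\gamma_j<t_1$ (resp. $\gamma_j>t_{m_\alpha+1}$), then $\varphi_j(x)\to-\infty$ (resp. $+\infty$) as $x\to\alpha^+$.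
   Context: $\operatorname{res}(\cdot,\cdot,y)$ denotes the resultant with respect to $y$. The functions $\varphi_j$ exist by delineability of $C$ over intervals between consecutive real roots of $R$; each arc of $C$ over $I$ either tends to a real root of $f(\alpha,y)$ or to $\pm\infty$ as $x\to\alpha^+$. *)

(* Defs.v *)
From HB Require Import structures.
From mathcomp Require Import all_boot all_order all_algebra.
From Stdlib Require Import Reals QArith.

Set Implicit Arguments.
Unset Strict Implicit.
Unset Printing Implicit Defensive.

Definition int2R (z : int) : R :=
  match z with
  | Posz n => INR n
  | Negz n => (- INR (S n))%R
  end.

Definition peval (p : {poly int}) (x : R) : R :=
  foldr (fun c acc => (int2R c + x * acc)%R) 0%R (polyseq p).

(* f in Z[x][y] = Z[x,y]: the outer variable is y, coefficients are in Z[x].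
   peval2 f x y = f(x, y). *)
Definition peval2 (f : {poly {poly int}}) (x y : R) : R :=
  foldr (fun c acc => (peval c x + y * acc)%R) 0%R (polyseq f).

Definition resY (f : {poly {poly int}}) : {poly int} := resultant f (deriv f).

Definition squarefreeXY (f : {poly {poly int}}) : Prop :=
  forall g h : {poly {poly int}}, f = GRing.mul (GRing.mul g g) h -> g \is a GRing.unit.

Definition no_Zx_factor (f : {poly {poly int}}) : Prop :=
  forall (g : {poly int}) (h : {poly {poly int}}),
    f = GRing.mul (polyC g) h -> leq (size g) 1.

(* The open interval I = (alpha, alpha') where alpha' is the next larger real
   root of Rp (or +infinity). *)
Definition inI (Rp : {poly int}) (alpha x : R) : Prop :=
  (alpha < x)%R /\ forall r : R, (alpha < r <= x)%R -> peval Rp r <> 0%R.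

(* Main.v *)
Require Import Defs.
From HB Require Import structures.
From mathcomp Require Import all_boot all_order all_algebra.
From Stdlib Require Import Reals QArith Lra.
From mathcomp Require Import zify.

Section Helpers.
Local Open Scope R_scope.

Definition E (s : seq int) (x : R) := foldr (fun c acc => int2R c + x * acc) 0 s.
Definition F (s : seq {poly int}) (x y : R) :=
  foldr (fun c acc => peval c x + y * acc) 0 s.

Lemma absb u : - Rabs u <= u <= Rabs u.
Proof. unfold Rabs; destruct (Rcase_abs u); lra. Qed.

Lemma E_bound s B : 0 <= B -> exists K, forall a, Rabs a <= B -> Rabs (E s a) <= K.
Proof.
move=> HB; elim: s => [|c s [K IH]].
  exists 0 => a _; rewrite /= Rabs_R0; lra.
exists (Rabs (int2R c) + B * K) => a Ha.
have HK : 0 <= K by apply: Rle_trans (IH 0 _); [apply Rabs_pos | rewrite Rabs_R0].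
change (Rabs (int2R c + a * E s a) <= Rabs (int2R c) + B * K).
have := Rabs_triang (int2R c) (a * E s a); rewrite Rabs_mult.
have : Rabs a * Rabs (E s a) <= B * K.
  apply Rmult_le_compat; [apply Rabs_pos|apply Rabs_pos|exact Ha|exact: IH].
lra.
Qed.

Lemma E_lip s B : 0 <= B -> exists L, 0 <= L /\ forall x a,
  Rabs x <= B -> Rabs a <= B -> Rabs (E s x - E s a) <= L * Rabs (x - a).
Proof.
move=> HB; elim: s => [|c s [L [HL IH]]].
  exists 0; split; [lra|] => x a _ _; rewrite /= Rminus_0_r Rabs_R0; lra.
have [K HK] := @E_bound s B HB.
have HK0 : 0 <= K by apply: Rle_trans (HK 0 _); [apply Rabs_pos | rewrite Rabs_R0].
exists (B * L + K); split; first by nra.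
move=> x a Hx Ha.
change (Rabs ((int2R c + x * E s x) - (int2R c + a * E s a)) <= (B * L + K) * Rabs (x - a)).
replace ((int2R c + x * E s x) - (int2R c + a * E s a)) with
  (x * (E s x - E s a) + (x - a) * E s a) by ring.
have := Rabs_triang (x * (E s x - E s a)) ((x - a) * E s a); rewrite !Rabs_mult.
have : Rabs x * Rabs (E s x - E s a) <= B * (L * Rabs (x - a)).
  apply Rmult_le_compat; [apply Rabs_pos|apply Rabs_pos|exact Hx|exact: IH].
have : Rabs (x - a) * Rabs (E s a) <= Rabs (x - a) * K.
  apply Rmult_le_compat_l; [apply Rabs_pos| exact: HK].
have Hd := Rabs_pos (x - a).
nra.
Qed.

Lemma F_lip s B : 0 <= B -> exists L, 0 <= L /\ forall x a y,
  Rabs x <= B -> Rabs a <= B -> Rabs y <= B ->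
  Rabs (F s x y - F s a y) <= L * Rabs (x - a).
Proof.
move=> HB; elim: s => [|c s [L [HL IH]]].
  exists 0; split; [lra|] => x a y _ _ _; rewrite /= Rminus_0_r Rabs_R0; lra.
have [Lc [HLc Hc]] := @E_lip (polyseq c) B HB.
exists (Lc + B * L); split; first by nra.
move=> x a y Hx Ha Hy.
change (Rabs ((peval c x + y * F s x y) - (peval c a + y * F s a y)) <= (Lc + B * L) * Rabs (x - a)).
replace ((peval c x + y * F s x y) - (peval c a + y * F s a y)) with
  ((peval c x - peval c a) + y * (F s x y - F s a y)) by ring.
have := Rabs_triang (peval c x - peval c a) (y * (F s x y - F s a y)); rewrite Rabs_mult.
have : Rabs y * Rabs (F s x y - F s a y) <= B * (L * Rabs (x - a)).
  apply Rmult_le_compat; [apply Rabs_pos|apply Rabs_pos|exact Hy|exact: IH].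
have := Hc x a Hx Ha.
have Hd := Rabs_pos (x - a).
rewrite /peval -/(E (polyseq c) x) -/(E (polyseq c) a).
nra.
Qed.

Lemma F_cont s x : continuity (fun y => F s x y).
Proof.
elim: s => [|c s IH].
  by apply continuity_const => ? ?.
change (continuity (plus_fct (fct_cte (peval c x)) (mult_fct id (fun y => F s x y)))).
apply continuity_plus; first by apply continuity_const => ? ?.
apply continuity_mult => //; apply derivable_continuous, derivable_id.
Qed.

Lemma core (f : {poly {poly int}}) alpha a c :
  (forall y, a <= y <= c -> peval2 f alpha y <> 0) ->
  exists d, 0 < d /\ forall x y, alpha < x < alpha + d -> a <= y <= c ->
    peval2 f x y <> 0.
Proof.
move=> H.
have e : forall x y, peval2 f x y = F (polyseq f) x y by [].
destruct (Rle_lt_dec a c) as [Hac|Hac]; last first.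
  exists 1; split; [lra|] => x y _ Hy; lra.
pose g := comp Rabs (fun y => peval2 f alpha y).
have [mx [Hmx Hmxr]] : exists mx, (forall y, a <= y <= c -> g mx <= g y) /\ a <= mx <= c.
  apply continuity_ab_min => // y _.
  apply continuity_pt_comp; last by apply Rcontinuity_abs.
  rewrite /peval2 -/(F (polyseq f) alpha); exact: F_cont.
set m := g mx.
have Hm : 0 < m by apply Rabs_pos_lt, H.
set B := Rabs alpha + 1 + Rabs a + Rabs c.
have HB0 : 0 <= B by have := Rabs_pos alpha; have := Rabs_pos a; have := Rabs_pos c; rewrite /B; lra.
have [L [HL HLip]] := @F_lip (polyseq f) B HB0.
exists (Rmin 1 (m / (L + 1))); split.
  apply Rmin_glb_lt; [lra| apply Rdiv_lt_0_compat; lra].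
move=> x y [Hx1 Hx2] Hy Hz.
have H1 := Rmin_l 1 (m / (L + 1)).
have H2 := Rmin_r 1 (m / (L + 1)).
have Ha := absb alpha. have Haa := absb a. have Hcc := absb c.
have Hxb : Rabs x <= B by apply Rabs_le; rewrite /B; split; lra.
have Hab : Rabs alpha <= B by apply Rabs_le; rewrite /B; split; lra.
have Hyb : Rabs y <= B by apply Rabs_le; rewrite /B; split; lra.
have := HLip x alpha y Hxb Hab Hyb.
rewrite -!e Hz Rminus_0_l Rabs_Ropp (Rabs_right (x - alpha)); last lra.
have Hgy := Hmx y Hy. rewrite /g /comp in Hgy.
have : (x - alpha) * (L + 1) < m / (L + 1) * (L + 1) by apply Rmult_lt_compat_r; lra.
replace (m / (L + 1) * (L + 1)) with m by (field; lra).
rewrite -/m in Hgy.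
move=> h1 h2; have : L * (x - alpha) <= (x - alpha) * (L + 1) by nra.
rewrite /m /g /comp in h1; lra.
Qed.

Lemma stay (phi : R -> R) lo b tv :
  (forall x, lo < x <= b -> continuity_pt phi x) ->
  (forall x, lo < x <= b -> phi x <> tv) ->
  forall x, lo < x <= b -> (phi b < tv -> phi x < tv) /\ (tv < phi b -> tv < phi x).
Proof.
move=> Hc Hn x Hx; split=> Hb.
- destruct (Rlt_le_dec (phi x) tv) as [|Hge] => //; exfalso.
  have Hne := Hn x Hx.
  destruct (Req_dec x b) as [Hxb|Hxb]; first by subst; lra.
  have : {z | x <= z <= b /\ (fun z => tv - phi z) z = 0}.
    apply Ranalysis5.IVT_interv; cbv beta; [|lra|lra|lra].
    move=> a Ha; apply (continuity_pt_minus (fct_cte tv) phi).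
      by apply continuity_pt_const => ? ?.
    apply Hc; lra.
  case=> z [Hz1 Hz2]; cbv beta in Hz2; apply (Hn z); lra.
- destruct (Rlt_le_dec tv (phi x)) as [|Hge] => //; exfalso.
  have Hne := Hn x Hx.
  destruct (Req_dec x b) as [Hxb|Hxb]; first by subst; lra.
  have : {z | x <= z <= b /\ (fun z => phi z - tv) z = 0}.
    apply Ranalysis5.IVT_interv; cbv beta; [|lra|lra|lra].
    move=> a Ha; apply (continuity_pt_minus phi (fct_cte tv)).
      apply Hc; lra.
    by apply continuity_pt_const => ? ?.
  case=> z [Hz1 Hz2]; cbv beta in Hz2; apply (Hn z); lra.
Qed.

End Helpers.

Theorem mainTheorem5
  (f : {poly {poly int}})
  (Hsqf : squarefreeXY f) (Hnox : no_Zx_factor f)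
  (alpha : R) (Halpha : peval (resY f) alpha = 0%R)
  (* the curve arcs over I = (alpha, alpha'): phi 1 < ... < phi mI, 1-based *)
  (mI : nat) (phi : nat -> R -> R)
  (Hphi_cont : forall j x, (1 <= j <= mI)%nat -> inI (resY f) alpha x ->
      continuity_pt (phi j) x)
  (Hphi_incr : forall j x, (1 <= j)%nat -> (j < mI)%nat -> inI (resY f) alpha x ->
      (phi j x < phi (S j) x)%R)
  (Hphi_graph : forall x y, inI (resY f) alpha x ->
      (peval2 f x y = 0%R <-> exists j, (1 <= j <= mI)%nat /\ y = phi j x))
  (* real roots y_1 < ... < y_malpha of f(alpha, y) *)
  (malpha : nat) (ys : nat -> R)
  (Hys_incr : forall i, (1 <= i)%nat -> (i < malpha)%nat -> (ys i < ys (S i))%R)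
  (Hys_roots : forall y,
      peval2 f alpha y = 0%R <-> exists i, (1 <= i <= malpha)%nat /\ y = ys i)
  (* rationals t_1 < y_1 < t_2 < ... < y_malpha < t_(malpha+1) *)
  (t : nat -> Q)
  (Ht : forall i, (1 <= i <= malpha)%nat ->
      (Q2R (t i) < ys i)%R /\ (ys i < Q2R (t (S i)))%R)
  (b : Q) (HbI : inI (resY f) alpha (Q2R b))
  (Hb : forall x i, (alpha <= x <= Q2R b)%R -> (1 <= i <= S malpha)%nat ->
      peval2 f x (Q2R (t i)) <> 0%R) :
  forall j, (1 <= j <= mI)%nat ->
    (forall i0, (1 <= i0 <= malpha)%nat ->
       (Q2R (t i0) < phi j (Q2R b) < Q2R (t (S i0)))%R ->
       forall eps, (0 < eps)%R -> exists delta, (0 < delta)%R /\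
         forall x, inI (resY f) alpha x -> (x < alpha + delta)%R ->
           (Rabs (phi j x - ys i0) < eps)%R)
    /\ ((phi j (Q2R b) < Q2R (t 1%nat))%R ->
       forall M, exists delta, (0 < delta)%R /\
         forall x, inI (resY f) alpha x -> (x < alpha + delta)%R -> (phi j x < M)%R)
    /\ ((Q2R (t (S malpha)) < phi j (Q2R b))%R ->
       forall M, exists delta, (0 < delta)%R /\
         forall x, inI (resY f) alpha x -> (x < alpha + delta)%R -> (M < phi j x)%R).
Proof.
Local Open Scope R_scope.
move=> j Hj.
have Hab : alpha < Q2R b := proj1 HbI.
have HinI : forall x, alpha < x <= Q2R b -> inI (resY f) alpha x.
  move=> x Hx; split; first lra. move=> r Hr; apply (proj2 HbI); lra.
have Hroot : forall x, inI (resY f) alpha x -> peval2 f x (phi j x) = 0.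
  move=> x Hx; apply/(Hphi_graph x) => //; exists j; split => //.
have Hcont : forall x, alpha < x <= Q2R b -> continuity_pt (phi j) x.
  move=> x Hx; apply Hphi_cont => //; exact: HinI.
have Hne : forall i, (1 <= i <= S malpha)%nat ->
    forall x, alpha < x <= Q2R b -> phi j x <> Q2R (t i).
  move=> i Hi x Hx He. apply (Hb x i) => //; [lra|]. rewrite -He; apply Hroot, HinI, Hx.
have Tstep : forall i, (1 <= i <= malpha)%nat -> Q2R (t i) < Q2R (t (S i)).
  move=> i Hi; have := Ht i Hi; lra.
have Tle : forall i k, (1 <= i)%nat -> (i <= k)%nat -> (k <= S malpha)%nat ->
    Q2R (t i) <= Q2R (t k).
  move=> i k H1; elim: k => [|k IH] H2 H3; first lia.
  case: (ltngtP i k.+1) => Hc; [|lia|by subst; lra].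
  have := IH ltac:(lia) ltac:(lia); have := Tstep k ltac:(lia); lra.
have Hbx : forall x, inI (resY f) alpha x -> x < Q2R b -> alpha < x <= Q2R b.
  move=> x [Hx _] Hxb; lra.
split; [|split].
- move=> i0 Hi0 [Hlo Hhi] eps Heps.
  have [g1 g2] := Ht i0 Hi0.
  have [d1 [Hd1 Hc1]] := @core f alpha (Q2R (t i0)) (ys i0 - eps) ltac:(
    move=> y Hy Hz; have [i [Hi Hyi]] := proj1 (Hys_roots y) Hz; subst y;
    have [h1 h2] := Ht i Hi;
    case: (ltngtP i i0) => Hc; [have := Tle i.+1 i0 ltac:(lia) ltac:(lia) ltac:(lia)
      | have := Tle i0.+1 i ltac:(lia) ltac:(lia) ltac:(lia) | subst]; lra).
  have [d2 [Hd2 Hc2]] := @core f alpha (ys i0 + eps) (Q2R (t i0.+1)) ltac:(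
    move=> y Hy Hz; have [i [Hi Hyi]] := proj1 (Hys_roots y) Hz; subst y;
    have [h1 h2] := Ht i Hi;
    case: (ltngtP i i0) => Hc; [have := Tle i.+1 i0 ltac:(lia) ltac:(lia) ltac:(lia)
      | have := Tle i0.+1 i ltac:(lia) ltac:(lia) ltac:(lia) | subst]; lra).
  exists (Rmin (Rmin d1 d2) (Q2R b - alpha)); split.
    apply Rmin_glb_lt; [apply Rmin_glb_lt|]; lra.
  move=> x Hx Hxd.
  have := Rmin_l (Rmin d1 d2) (Q2R b - alpha); have := Rmin_r (Rmin d1 d2) (Q2R b - alpha).
  have := Rmin_l d1 d2; have := Rmin_r d1 d2; move=> m1 m2 m3 m4.
  have Hxx := Hbx x Hx ltac:(lra).
  have [_ L1] := @stay (phi j) alpha (Q2R b) (Q2R (t i0)) Hcont (Hne i0 ltac:(lia)) x Hxx.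
  have [L2 _] := @stay (phi j) alpha (Q2R b) (Q2R (t i0.+1)) Hcont (Hne i0.+1 ltac:(lia)) x Hxx.
  have Hl := L1 Hlo; have Hh := L2 Hhi.
  have Hr := Hroot x Hx.
  apply Rabs_def1.
    destruct (Rlt_le_dec (phi j x - ys i0) eps) as [|Hge] => //.
    exfalso; apply (Hc2 x (phi j x)); [lra|lra|exact Hr].
  destruct (Rlt_le_dec (- eps) (phi j x - ys i0)) as [|Hge] => //.
  exfalso; apply (Hc1 x (phi j x)); [lra|lra|exact Hr].
- move=> Hlow M.
  have [d [Hd Hc]] := @core f alpha (Rmin M (Q2R (t 1%nat))) (Q2R (t 1%nat)) ltac:(
    move=> y Hy Hz; have [i [Hi Hyi]] := proj1 (Hys_roots y) Hz; subst y;
    have [h1 h2] := Ht i Hi; have := Tle 1%nat i ltac:(lia) ltac:(lia) ltac:(lia); lra).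
  exists (Rmin d (Q2R b - alpha)); split; first by apply Rmin_glb_lt; lra.
  move=> x Hx Hxd.
  have m1 := Rmin_l d (Q2R b - alpha); have m2 := Rmin_r d (Q2R b - alpha).
  have Hxx := Hbx x Hx ltac:(lra).
  have [L1 _] := @stay (phi j) alpha (Q2R b) (Q2R (t 1%nat)) Hcont (Hne 1%nat ltac:(lia)) x Hxx.
  have Hl := L1 Hlow. have Hr := Hroot x Hx.
  have m3 := Rmin_l M (Q2R (t 1%nat)).
  destruct (Rlt_le_dec (phi j x) M) as [|Hge] => //.
  exfalso; apply (Hc x (phi j x)); [lra|lra|exact Hr].
- move=> Hhigh M.
  have [d [Hd Hc]] := @core f alpha (Q2R (t malpha.+1)) (Rmax M (Q2R (t malpha.+1))) ltac:(
    move=> y Hy Hz; have [i [Hi Hyi]] := proj1 (Hys_roots y) Hz; subst y;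
    have [h1 h2] := Ht i Hi; have := Tle i.+1 malpha.+1 ltac:(lia) ltac:(lia) ltac:(lia); lra).
  exists (Rmin d (Q2R b - alpha)); split; first by apply Rmin_glb_lt; lra.
  move=> x Hx Hxd.
  have m1 := Rmin_l d (Q2R b - alpha); have m2 := Rmin_r d (Q2R b - alpha).
  have Hxx := Hbx x Hx ltac:(lra).
  have [_ L1] := @stay (phi j) alpha (Q2R b) (Q2R (t malpha.+1)) Hcont (Hne malpha.+1 ltac:(lia)) x Hxx.
  have Hl := L1 Hhigh. have Hr := Hroot x Hx.
  have m3 := Rmax_l M (Q2R (t malpha.+1)).
  destruct (Rlt_le_dec M (phi j x)) as [|Hge] => //.
  exfalso; apply (Hc x (phi j x)); [lra|lra|exact Hr].
Qed.
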